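(* Let $A=\{x_1,\dots,x_\ell\}$ be a finite subset of $(\mathbb{R}\cup\{-\infty\})^d$ and let $\{\alpha_k\}_{k\in\mathbb N}$ be a sequence of positive real numbers with $\lim_{k\to\infty}\alpha_k=+\infty$. Then, in the Painlevé–Kuratowski sense, $$\lim_{k\to\infty} Co^{\sigma_{\alpha_k}}(A)=Co^{\sigma_{\infty}}(A).$$ Similarly, let $A=\{x_1,\dots,x_\ell\}$ be a finite subset of $(\mathbb{R}\cup\{+\infty\})^d$ and let $\{\alpha_k\}_{k\in\mathbb N}$ be a sequence of negative real numbers with $\lim_{k\to\infty}\alpha_k=-\infty$. Then $$\lim_{k\to\infty} Co^{\sigma_{\alpha_k}}(A)=Co^{\sigma_{-\infty}}(A).$$
   Context: Notation: $1\!\!1_d$ is the vector of ones in dimension $d$; $\mathbf{e}^z$ and $\mathbf{ln}(z)$ denote componentwise exponential and logarithm, with conventions $e^{-\infty}=0$, $\ln 0=-\infty$, and for $\alpha\neq 0$, $e^{\alpha t}=0$ when $\alpha t=-\infty$. For $\alpha\neq 0$ let $\mathbb M_\alpha=\mathbb{R}\cup\{-\infty\}$ if $\alpha>0$ and $\mathbb M_\alpha=\mathbb{R}\cup\{+\infty\}$ if $\alpha<0$. For a finite set $A=\{x_1,\dots,x_\ell\}\subset\mathbb M_\alpha^d$, the $\sigma_\alpha$-convex hull is $$Co^{\sigma_\alpha}(A)=\Big\{\tfrac1\alpha\mathbf{ln}\Big(\sum_{k=1}^\ell \mathbf e^{\alpha(t_k1\!\!1_d+x_k)}\Big):\ \tfrac1\alpha\ln\Big(\sum_{k=1}^\ell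 e^{\alpha t_k}\Big)=0,\ t\in\mathbb M_\alpha^\ell\Big\}.$$ The Max-Plus convex hull of $A\subset(\mathbb{R}\cup\{-\infty\})^d$ is $Co^{\sigma_\infty}(A)=\{\bigvee_{k}(t_k1\!\!1_d+x_k):\max_k t_k=0,\ t\in(\mathbb{R}\cup\{-\infty\})^\ell\}$, and the Min-Plus convex hull of $A\subset(\mathbb{R}\cup\{+\infty\})^d$ is $Co^{\sigma_{-\infty}}(A)=\{\bigwedge_{k}(t_k1\!\!1_d+x_k):\min_k t_k=0,\ t\in(\mathbb{R}\cup\{+\infty\})^\ell\}$, where $\vee,\wedge$ are componentwise max and min. For a sequence of sets $E_n$, the lower Painlevé–Kuratowski limit is the set of points $p$ such that there exist $p_n\in E_n$ with $p_n\to p$; the upper limit is the set of $p$ such that $p_{n_j}\to p$ for some subsequence with $p_{n_j}\in E_{n_j}$; the limit exists and equals $E$ when both coincide with $E$. (Points with infinite coordinates are handled with the usual order topology on $\mathbb{R}\cup\{\pm\infty\}$.) *)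

(* Defs.v *)
From mathcomp Require Import all_boot all_order all_algebra.
From mathcomp Require Import all_classical all_reals all_analysis.
Set Implicit Arguments. Unset Strict Implicit. Unset Printing Implicit Defensive.
Import Order.TTheory GRing.Theory Num.Theory.
Local Open Scope classical_set_scope.
Local Open Scope ring_scope.

Section Defs.
Variable R : realType.

Definition Malpha (alpha : R) (s : \bar R) : Prop :=
  if 0 < alpha then s <> +oo%E else s <> -oo%E.

(* (1/alpha) ln (y), with ln 0 = -oo, for y >= 0 an extended real *)
Definition inv_alpha_ln (alpha : R) (y : \bar R) : \bar R :=
  ((alpha^-1)%:E * lne y)%E.

Definition Co_sigma (d l : nat) (alpha : R) (x : 'I_l -> 'I_d -> \bar R)
  : set ('I_d -> \bar R) :=
  [set p | exists t : 'I_l -> \bar R,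
     (forall k, Malpha alpha (t k)) /\
     inv_alpha_ln alpha (\sum_(k < l) expeR (alpha%:E * t k))%E = 0%E /\
     p = (fun i => inv_alpha_ln alpha
                    (\sum_(k < l) expeR (alpha%:E * (t k + x k i)))%E)].

Definition Co_maxplus (d l : nat) (x : 'I_l -> 'I_d -> \bar R)
  : set ('I_d -> \bar R) :=
  [set p | exists t : 'I_l -> \bar R,
     (forall k, t k <> +oo%E) /\
     \big[Order.max/-oo%E]_(k < l) t k = 0%E /\
     p = (fun i => \big[Order.max/-oo%E]_(k < l) (t k + x k i)%E)].

Definition Co_minplus (d l : nat) (x : 'I_l -> 'I_d -> \bar R)
  : set ('I_d -> \bar R) :=
  [set p | exists t : 'I_l -> \bar R,
     (forall k, t k <> -oo%E) /\
     \big[Order.min/+oo%E]_(k < l) t k = 0%E /\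
     p = (fun i => \big[Order.min/+oo%E]_(k < l) (t k + x k i)%E)].

(* convergence in (\bar R)^d: componentwise, in the order topology of \bar R *)
Definition cvg_pt (d : nat) (q : nat -> 'I_d -> \bar R) (p : 'I_d -> \bar R) :=
  forall i, (fun n => q n i) @ \oo --> p i.

Definition PK_liminf (d : nat) (E : nat -> set ('I_d -> \bar R)) :=
  [set p | exists q : nat -> 'I_d -> \bar R,
     (forall n, E n (q n)) /\ cvg_pt q p].

Definition PK_limsup (d : nat) (E : nat -> set ('I_d -> \bar R)) :=
  [set p | exists (phi : nat -> nat) (q : nat -> 'I_d -> \bar R),
     (forall j, (phi j < phi j.+1)%N) /\
     (forall j, E (phi j) (q j)) /\ cvg_pt q p].

Definition PK_lim (d : nat) (E : nat -> set ('I_d -> \bar R))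
  (F : set ('I_d -> \bar R)) :=
  PK_liminf E = F /\ PK_limsup E = F.

End Defs.

(* Main.v *)
Require Import Defs.
From mathcomp Require Import all_boot all_order all_algebra.
From mathcomp Require Import all_classical all_reals all_analysis.
From mathcomp Require Import ring lra.
Import Order.TTheory GRing.Theory Num.Theory.
Local Open Scope classical_set_scope.
Local Open Scope ring_scope.

Module Helpers.
Import numFieldNormedType.Exports.
Section Aux.
Variable R : realType.
Local Open Scope ereal_scope.

Definition eterm (a : R) (y : \bar R) : R :=
  match y with r%:E => expR (a * r) | _ => 0%R end.

Lemma etermE (a : R) (y : \bar R) : (0 < a)%R -> y != +oo ->
  expeR (a%:E * y) = (eterm a y)%:E.
Proof.
move=> a0; case: y => [r| |] //= _.
by rewrite gt0_muleNy ?lte_fin.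
Qed.

Lemma eterm_ge0 a y : (0 <= eterm a y)%R.
Proof. by case: y => [r| |] //=; exact: expR_ge0. Qed.

Lemma L1 (l : nat) (a : R) (y : 'I_l -> \bar R) : (0 < a)%R ->
  (forall k, y k != +oo) ->
  (forall k, y k <= inv_alpha_ln a (\sum_(k < l) expeR (a%:E * y k))) /\
  (forall k0 : 'I_l, exists k,
     inv_alpha_ln a (\sum_(k < l) expeR (a%:E * y k)) <= y k + (ln l%:R / a)%:E).
Proof.
move=> a0 yfin.
have -> : \sum_(k < l) expeR (a%:E * y k) = (\sum_(k < l) eterm a (y k))%:E.
  by rewrite -sumEFin; apply: eq_bigr => k _; rewrite etermE.
set s := (\sum_(k < l) eterm a (y k))%R.
have s0 : (0 <= s)%R by apply: sumr_ge0 => k _; exact: eterm_ge0.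
have es k : (eterm a (y k) <= s)%R.
  rewrite /s (bigD1 k) //= lerDl; apply: sumr_ge0 => i _; exact: eterm_ge0.
have vE : (0 < s)%R -> inv_alpha_ln a s%:E = (a^-1 * ln s)%:E.
  by move=> sp; rewrite /inv_alpha_ln lne_EFin.
have vNy : s = 0%R -> inv_alpha_ln a s%:E = -oo.
  by move=> ->; rewrite /inv_alpha_ln /= lexx gt0_muleNy // lte_fin invr_gt0.
split.
  move=> k; move: (es k); case E : (y k) => [r| |] /=; last by rewrite leNye.
    move=> er; have sp : (0 < s)%R by apply: lt_le_trans er; exact: expR_gt0.
    rewrite vE // lee_fin ler_pdivlMl //.
    by rewrite -ler_expR lnK ?posrE.
  by have := yfin k; rewrite E.
move=> k0.
have [m _ Hm] := @eq_bigmax _ _ _ (-oo) k0 xpredT y isT (fun i _ => leNye (y i)).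
have ym k : y k <= y m by rewrite -Hm; exact: le_bigmax.
exists m.
case E : (y m) => [r| |]; [|by have := yfin m; rewrite E|].
  have sp : (0 < s)%R.
    by apply: lt_le_trans (es m); rewrite E /=; exact: expR_gt0.
  have sl : (s <= l%:R * expR (a * r))%R.
    have -> : (l%:R * expR (a * r) = \sum_(k < l) expR (a * r))%R.
      by rewrite sumr_const card_ord mulr_natl.
    apply: ler_sum => k _; move: (ym k); rewrite E.
    case: (y k) => [r'| |] //= => //; first by rewrite lee_fin => rr; rewrite ler_expR ler_pM2l.
  have l0 : (0 < l)%N by case: (l) k0 => // -[].
  rewrite vE // -EFinD lee_fin.
  have : (ln s <= ln (l%:R) + a * r)%R.
    by rewrite -[(a * r)%R]expRK -lnM ?posrE ?ltr0n ?expR_gt0 // ler_ln ?posrE ?mulr_gt0 ?ltr0n ?expR_gt0.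
  move=> h.
  have -> : (r + ln l%:R / a = a^-1 * (ln l%:R + a * r))%R.
    by field; rewrite gt_eqF.
  by rewrite ler_pM2l ?invr_gt0.
have s00 : s = 0%R.
  apply/eqP; rewrite /s psumr_eq0; last by move=> i _; exact: eterm_ge0.
  apply/allP => k _; move: (ym k); rewrite E; case: (y k) => //=.
by rewrite vNy // leNye.
Qed.


Lemma PH (l : nat) (P : nat -> 'I_l -> Prop) : (forall j, exists k, P j k) ->
  exists k, forall N, exists j, (N <= j)%N /\ P j k.
Proof.
move=> H; apply: contrapT => /forallNP H1.
have H2 k : exists N, forall j, (N <= j)%N -> ~ P j k.
  have /existsNP [N HN] := H1 k; exists N => j Nj Pj; apply: HN; by exists j.
have [N HN] := choice H2.
have [k Pk] := H (\max_(k < l) N k).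
by apply: (HN k _ _ Pk); exact: leq_bigmax.
Qed.

Lemma subseq_cvg (g : nat -> nat) : (forall N, (N <= g N)%N) -> g @ \oo --> \oo.
Proof.
move=> hg; apply/cvgnyPge => A; near=> x; apply: leq_trans (hg x).
by near: x; exact: nbhs_infty_ge.
Unshelve. all: by end_near. Qed.

Lemma LIO (a b : nat -> \bar R) (la lb : \bar R) :
  a @ \oo --> la -> b @ \oo --> lb ->
  (forall N, exists j, (N <= j)%N /\ a j <= b j) -> la <= lb.
Proof.
move=> ha hb H.
have [g Hg] := choice H.
have gc : g @ \oo --> \oo by apply: subseq_cvg => N; exact: (Hg N).1.
have sa : (a \o g) @ \oo --> la := cvg_comp _ _ gc ha.
have sb : (b \o g) @ \oo --> lb := cvg_comp _ _ gc hb.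
apply: (lee_cvg_to sa sb).
by apply: nearW => n; exact: (Hg n).2.
Qed.

Lemma CV (u : nat -> \bar R) (v : nat -> R) (lu : \bar R) (lv : R) :
  u @ \oo --> lu -> v @ \oo --> (lv : R) -> (u n + (v n)%:E) @[n --> \oo] --> lu + lv%:E.
Proof.
move=> hu hv; apply: cvgeD => //; first exact: fin_num_adde_defl.
by apply/fine_cvgP; split; [exact: nearW | exact: hv].
Qed.

End Aux.
Arguments LIO {R} [a b la lb].
Arguments CV {R} [u v lu lv].
Arguments PH [l P].
Arguments L1 {R} [l] a y.
Arguments eterm {R}.
Arguments etermE {R}.
Arguments eterm_ge0 {R}.
Arguments subseq_cvg [g].

Section PosB.
Variable R : realType.
Local Open Scope ereal_scope.

Lemma limsup_sub d l (x : 'I_l.+1 -> 'I_d -> \bar R) (alpha : nat -> R)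
  (phi : nat -> nat) (q : nat -> 'I_d -> \bar R) (p : 'I_d -> \bar R)
  (T : nat -> 'I_l.+1 -> \bar R) :
  (forall k i, x k i <> +oo) ->
  (forall n, (0 < alpha n)%R) ->
  let e := fun j => (ln (l.+1)%:R / alpha (phi j))%R in
  e @ \oo --> 0%R ->
  (forall j k, T j k <= 0) ->
  (forall j, exists k, 0 <= T j k + (e j)%:E) ->
  (forall j k i, T j k + x k i <= q j i) ->
  (forall j i, exists k, q j i <= T j k + x k i + (e j)%:E) ->
  cvg_pt q p ->
  Co_maxplus x p.
Proof.
move=> xfin a0 e ecvg F1 F2 F3 F4 qp.
have ecvgE : (fun j => (e j)%:E) @ \oo --> 0%:E.
  by apply/fine_cvgP; split; [exact: nearW | exact: ecvg].
have qe i : (fun j => q j i + (e j)%:E) @ \oo --> p i.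
  by rewrite -[p i]adde0; apply: CV => //; exact: qp.
pose S k := [set s : \bar R | s <= 0 /\ forall i, s + x k i <= p i].
pose th k := ereal_sup (S k).
have th0 k : th k <= 0 by apply: ge_ereal_sup => s [].
exists th; split; first by move=> k Hk; have := th0 k; rewrite Hk.
split.
  apply/le_anti/andP; split; first by apply: bigmax_le => //; exact: leNye.
  have [k Hk] := PH F2.
  apply: le_trans (le_bigmax _ _ k).
  apply: ereal_sup_ubound; split => // i; rewrite add0e.
  apply: (LIO (cvg_cst (x k i)) (qe i)) => N.
  have [j [Nj Hj]] := Hk N; exists j; split => //.
  apply: le_trans (leeD2r _ (F3 j k i)).
  rewrite addeAC; apply: le_trans (leeD2r _ Hj); by rewrite add0e.
apply/funext => i; apply/le_anti/andP; split.
  have [k Hk] := PH (fun j => F4 j i).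
  apply: le_trans (le_bigmax _ _ k).
  case E : (x k i) => [r| |]; [|by have := xfin k i; rewrite E|].
  - have pr : p i <= r%:E.
      have := LIO (qp i) (CV (cvg_cst r%:E) ecvg); rewrite adde0; apply => N.
      have [j [Nj Hj]] := Hk N; exists j; split => //.
      apply: le_trans Hj _; rewrite E; apply: leeD2r.
      by rewrite -[X in _ <= X]add0e; exact: leeD2r (F1 j k).
    rewrite -leeBlDr //; apply: ereal_sup_ubound; split.
      by rewrite leeBlDr // add0e.
    move=> i'; case E' : (x k i') => [r'| |]; [|by have := xfin k i'; rewrite E'|by rewrite addeNy leNye].
    rewrite -addeA -EFinN -EFinD.
    have wc : (fun j => (- r + r') - e j)%R @ \oo --> (- r + r' - 0)%R.
      exact: cvgB (cvg_cst _) ecvg.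
    have := LIO (CV (qp i) wc) (qp i'); rewrite subr0; apply => N.
    have [j [Nj Hj]] := Hk N; exists j; split => //.
    apply: le_trans (leeD2r _ Hj) _.
    rewrite E -!addeA -!EFinD.
    have -> : (r + (e j + (- r + r' - e j)) = r')%R by ring.
    by rewrite -E'; exact: F3.
  - have : p i <= -oo.
      apply: (LIO (qp i) (cvg_cst -oo)) => N.
      have [j [Nj Hj]] := Hk N; exists j; split => //.
      by move: Hj; rewrite E addeNy addNye.
    by move=> /le_trans; apply; exact: leNye.
apply: bigmax_le; first exact: leNye. move=> k _.
case E : (x k i) => [r| |]; [|by have := xfin k i; rewrite E|by rewrite addeNy leNye].
rewrite -leeBrDr //; apply: ge_ereal_sup => s [_ Hs].
by rewrite leeBrDr // -E; exact: Hs.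
Qed.
End PosB.

Section PosA.
Variable R : realType.
Local Open Scope ereal_scope.

Lemma SQ (u : nat -> \bar R) (P : \bar R) (e : nat -> R) :
  e @ \oo --> 0%R -> (forall n, P <= u n + (e n)%:E) -> (forall n, u n <= P + (e n)%:E) ->
  u @ \oo --> P.
Proof.
move=> ec H1 H2.
have f1 : (fun n => P + (- e n)%:E) @ \oo --> P.
  have h1 : (fun n => - e n)%R @ \oo --> (- 0 : R)%R by exact: cvgN.
  have cP : (fun _ : nat => P) @ \oo --> P by exact: cvg_cst.
  by have := CV cP h1; rewrite oppr0 adde0.
have f2 : (fun n => P + (e n)%:E) @ \oo --> P.
  have cP : (fun _ : nat => P) @ \oo --> P by exact: cvg_cst.
  by have := CV cP ec; rewrite adde0.
apply: (squeeze_cvge _ f1 f2); apply: nearW => n; apply/andP; split => //.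
by rewrite EFinN leeBlDr.
Qed.

Lemma addfin (a b : \bar R) : a != +oo -> b != +oo -> a + b != +oo.
Proof. by case: a => [a| |] //; case: b. Qed.

Lemma liminf_sup d l (x : 'I_l.+1 -> 'I_d -> \bar R) (alpha : nat -> R) p :
  (forall k i, x k i <> +oo) ->
  (forall n, (0 < alpha n)%R) ->
  let e := fun n => (ln (l.+1)%:R / alpha n)%R in
  e @ \oo --> 0%R ->
  Co_maxplus x p -> PK_liminf (fun n => Co_sigma (alpha n) x) p.
Proof.
move=> xfin a0 e ec [t [tfin [tmax ->]]].
have [m _ Hm] := eq_bigmax ord0 xpredT t isT (fun i _ => leNye (t i)).
have tm : t m = 0 by rewrite -Hm tmax.
have tle k : t k <= 0 by rewrite -tmax; exact: le_bigmax.
have tfin' k : t k != +oo by apply/eqP.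
have xfin' k i : x k i != +oo by apply/eqP.
pose s n := (\sum_(k < l.+1) eterm (alpha n) (t k))%R.
have s1 n : (1 <= s n)%R.
  rewrite /s (bigD1 m) //= tm /= mulr0 expR0 lerDl.
  by apply: sumr_ge0 => k _; exact: eterm_ge0.
pose c n := ((alpha n)^-1 * ln (s n))%R.
have cE n : inv_alpha_ln (alpha n) (\sum_(k < l.+1) expeR ((alpha n)%:E * t k)) = (c n)%:E.
  have -> : \sum_(k < l.+1) expeR ((alpha n)%:E * t k) = (s n)%:E.
    by rewrite -sumEFin; apply: eq_bigr => k _; rewrite etermE.
  by rewrite /inv_alpha_ln lne_EFin // (lt_le_trans ltr01 (s1 n)).
have c0 n : (0 <= c n)%R.
  by apply: mulr_ge0; [rewrite invr_ge0 ltW | exact: ln_ge0 (s1 n)].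
have ce n : (c n <= e n)%R.
  have [_ L] := L1 (alpha n) t (a0 n) tfin'.
  have [k Hk] := L ord0; move: Hk; rewrite cE.
  move=> /le_trans /(_ (leeD2r _ (tle k))); rewrite add0e lee_fin; exact.
pose tt n k := t k + (- c n)%:E.
have ttx n k i : tt n k + x k i != +oo.
  by apply: addfin => //; apply: addfin.
exists (fun n i => inv_alpha_ln (alpha n) (\sum_(k < l.+1) expeR ((alpha n)%:E * (tt n k + x k i)))).
split.
  move=> n; exists (tt n); split.
    by move=> k; rewrite /Malpha a0; apply/eqP; rewrite /tt; exact: addfin.
  split => //.
  have sp : (0 < s n)%R by exact: (lt_le_trans ltr01 (s1 n)).
  have -> : \sum_(k < l.+1) expeR ((alpha n)%:E * tt n k) =
            (s n * expR (- (alpha n * c n)))%:E.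
    rewrite (eq_bigr (fun k => (eterm (alpha n) (tt n k))%:E)); last first.
      by move=> k _; rewrite etermE //; rewrite /tt; exact: addfin.
    rewrite sumEFin /s mulr_suml; congr (_%:E); apply: eq_bigr => k _.
    rewrite /tt; case: (t k) => [r| |] /=; rewrite ?mul0r //.
    by rewrite -expRD; congr expR; ring.
  rewrite /c mulVKf ?gt_eqF // expRN lnK ?posrE // divff ?gt_eqF //.
  by rewrite /inv_alpha_ln lne_EFin // ln1 mule0.
move=> i.
apply: (SQ _ _ _ ec) => n.
  have [U _] := L1 (alpha n) (fun k => tt n k + x k i) (a0 n) (fun k => ttx n k i).
  apply: bigmax_le; first exact: leNye.
  move=> k _.
  have -> : t k + x k i = tt n k + x k i + (c n)%:E.
    by rewrite /tt (addeAC (t k)) -!addeA -EFinD addNr adde0.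
  apply: le_trans (leeD2r _ (U k)) _; by apply: leeD2l; rewrite lee_fin; exact: ce.
have [_ L] := L1 (alpha n) (fun k => tt n k + x k i) (a0 n) (fun k => ttx n k i).
have [k Hk] := L ord0; apply: le_trans Hk _.
apply: leeD2r; apply: le_trans (le_bigmax _ _ k); apply: leeD2r.
rewrite /tt -[X in _ <= X]adde0; apply: leeD2l; rewrite lee_fin oppr_le0; exact: c0.
Qed.
End PosA.

Section Pos.
Variable R : realType.
Local Open Scope ereal_scope.

Lemma pos_case d l (x : 'I_l -> 'I_d -> \bar R) (alpha : nat -> R) :
  (forall k i, x k i <> +oo) ->
  (forall n, (0 < alpha n)%R) ->
  alpha @ \oo --> +oo%R ->
  PK_lim (fun n => Co_sigma (alpha n) x) (Co_maxplus x).
Proof.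
case: l x => [|l] x xfin a0 ainf.
  have E0 n p : ~ Co_sigma (alpha n) x p.
    move=> [t [_ [H _]]]; move: H; rewrite big_ord0 /inv_alpha_ln /= lexx.
    by rewrite gt0_muleNy // lte_fin invr_gt0.
  have M0 p : ~ Co_maxplus x p by move=> [t [_ [H _]]]; move: H; rewrite big_ord0.
  split; apply/seteqP; split => p //=.
  - by move=> [q [Hq _]]; case: (E0 _ _ (Hq 0%N)).
  - by move=> /M0.
  - by move=> [phi [q [_ [Hq _]]]]; case: (E0 _ _ (Hq 0%N)).
  - by move=> /M0.
have ecv (phi : nat -> nat) : (forall j, (j <= phi j)%N) ->
    (fun j => ln (l.+1)%:R / alpha (phi j))%R @ \oo --> 0%R.
  move=> hphi.
  have h1 : (alpha \o phi) @ \oo --> +oo%R := cvg_comp _ _ (subseq_cvg hphi) ainf.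
  have h2 : (fun j => (alpha (phi j))^-1)%R @ \oo --> 0%R.
    by apply/gtr0_cvgV0 => //; apply: nearW => j; exact: a0.
  by have := cvgMl_tmp (a := ln (l.+1)%:R) h2; rewrite mulr0; apply; exact: eventually_filter.
have infsup : PK_liminf (fun n => Co_sigma (alpha n) x) `<=` PK_limsup (fun n => Co_sigma (alpha n) x).
  by move=> p [q [Hq qp]]; exists id, q; split.
have supmax : PK_limsup (fun n => Co_sigma (alpha n) x) `<=` Co_maxplus x.
  move=> p [phi [q [phiI [Hq qp]]]].
  have hphi j : (j <= phi j)%N.
    by elim: j => // j IH; exact: leq_ltn_trans IH (phiI j).
  have [T HT] := choice Hq.
  have Tfin j k : T j k != +oo.
    have [H _] := HT j; have := H k; rewrite /Malpha a0 => ?; exact/eqP.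
  apply: (@limsup_sub _ _ _ x alpha phi q p T xfin a0 (ecv _ hphi) _ _ _ _ qp).
  - move=> j k; have [_ [H _]] := HT j.
    by have := (L1 (alpha (phi j)) (T j) (a0 _) (Tfin j)).1 k; rewrite H.
  - move=> j; have [_ [H _]] := HT j.
    have [k Hk] := (L1 (alpha (phi j)) (T j) (a0 _) (Tfin j)).2 ord0.
    by exists k; rewrite -H.
  - move=> j k i; have [_ [_ ->]] := HT j.
    apply: (L1 (alpha (phi j)) (fun k => T j k + x k i) (a0 _) _).1.
    by move=> k'; apply: addfin => //; apply/eqP.
  - move=> j i; have [_ [_ ->]] := HT j.
    apply: (L1 (alpha (phi j)) (fun k => T j k + x k i) (a0 _) _).2 ord0.
    by move=> k'; apply: addfin => //; apply/eqP.
have maxinf : Co_maxplus x `<=` PK_liminf (fun n => Co_sigma (alpha n) x).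
  move=> p Hp; apply: liminf_sup xfin a0 _ Hp.
  by apply: (ecv id).
split; apply/seteqP; split.
- by move=> p /infsup /supmax.
- exact: maxinf.
- exact: supmax.
- by move=> p /maxinf /infsup.
Qed.
End Pos.

Section Neg.
Variable R : realType.
Local Open Scope ereal_scope.

Lemma defNy (a b : \bar R) : a != -oo -> b != -oo -> a +? b.
Proof. by case: a => [a| |] //; case: b. Qed.

Lemma defy (a b : \bar R) : a != +oo -> b != +oo -> a +? b.
Proof. by case: a => [a| |] //; case: b. Qed.

Lemma negN d (f : 'I_d -> \bar R) : (fun i => - (fun i => - f i) i) = f.
Proof. by apply/funext => i; rewrite oppeK. Qed.

Lemma PKneg_inf d (E : nat -> set ('I_d -> \bar R)) :
  PK_liminf (fun n => [set p | E n (fun i => - p i)]) =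
  [set p | PK_liminf E (fun i => - p i)].
Proof.
apply/seteqP; split => p /=.
  move=> [q [Hq qp]]; exists (fun n i => - q n i); split => // i.
  exact: cvgeN.
move=> [q [Hq qp]]; exists (fun n i => - q n i); split.
  by move=> n /=; rewrite negN.
move=> i; rewrite -[p i]oppeK; exact: cvgeN.
Qed.

Lemma PKneg_sup d (E : nat -> set ('I_d -> \bar R)) :
  PK_limsup (fun n => [set p | E n (fun i => - p i)]) =
  [set p | PK_limsup E (fun i => - p i)].
Proof.
apply/seteqP; split => p /=.
  move=> [phi [q [Hphi [Hq qp]]]]; exists phi, (fun n i => - q n i); split => //; split => // i.
  exact: cvgeN.
move=> [phi [q [Hphi [Hq qp]]]]; exists phi, (fun n i => - q n i); split => //; split.
  by move=> n /=; rewrite negN.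
move=> i; rewrite -[p i]oppeK; exact: cvgeN.
Qed.

Lemma PKneg d (E : nat -> set ('I_d -> \bar R)) F :
  PK_lim E F -> PK_lim (fun n => [set p | E n (fun i => - p i)]) [set p | F (fun i => - p i)].
Proof.
move=> [H1 H2]; split; [rewrite PKneg_inf H1 | rewrite PKneg_sup H2] => //.
Qed.

Lemma negsig d l (x : 'I_l -> 'I_d -> \bar R) (a : R) : (a < 0)%R ->
  (forall k i, x k i <> -oo) ->
  Co_sigma a x = [set p | Co_sigma (- a) (fun k i => - x k i) (fun i => - p i)].
Proof.
move=> a0 xfin.
have xfin' k i : x k i != -oo by apply/eqP.
have key (y : 'I_l -> \bar R) : inv_alpha_ln (- a) (\sum_(k < l) expeR ((- a)%:E * - y k)) =
    - inv_alpha_ln a (\sum_(k < l) expeR (a%:E * y k)).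
  rewrite /inv_alpha_ln invrN EFinN mulNe; congr (- (_ * lne _)).
  by apply: eq_bigr => k _; rewrite EFinN muleNN.
have keyN (y : 'I_l -> \bar R) : inv_alpha_ln a (\sum_(k < l) expeR (a%:E * - y k)) =
    - inv_alpha_ln (- a) (\sum_(k < l) expeR ((- a)%:E * y k)).
  rewrite /inv_alpha_ln invrN EFinN mulNe oppeK; congr (_ * lne _).
  by apply: eq_bigr => k _; rewrite EFinN mulNe muleN.
have Ma s : Malpha a s <-> s <> -oo.
  by rewrite /Malpha ltNge (ltW a0).
have Mna s : Malpha (- a) s <-> s <> +oo.
  by rewrite /Malpha oppr_gt0 a0.
apply/seteqP; split => p /=.
  move=> [t [Mt [Ht ->]]]; exists (fun k => - t k); split.
    by move=> k; apply/Mna; have /Ma := Mt k; case: (t k).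
  split; first by rewrite key Ht oppe0.
  apply/funext => i /=; rewrite -key; congr (inv_alpha_ln _ _); apply: eq_bigr => k _.
  rewrite oppeD //; apply: defNy => //; apply/eqP; exact/Ma.
move=> [t' [Mt [Ht Hp]]]; exists (fun k => - t' k); split.
  by move=> k; apply/Ma; have /Mna := Mt k; case: (t' k).
split; first by rewrite keyN Ht oppe0.
apply/funext => i /=.
have /= Hpi := congr1 (fun f => f i) Hp.
rewrite -[p i]oppeK Hpi -(keyN (fun k => t' k - x k i)).
congr (inv_alpha_ln _ _); apply: eq_bigr => k _.
rewrite oppeD ?oppeK //; apply: defy; [apply/eqP; exact/Mna | by case: (x k i) (xfin' k i)].
Qed.

Lemma negmin d l (x : 'I_l -> 'I_d -> \bar R) :
  (forall k i, x k i <> -oo) ->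
  Co_minplus x = [set p | Co_maxplus (fun k i => - x k i) (fun i => - p i)].
Proof.
move=> xfin.
have xfin' k i : x k i != -oo by apply/eqP.
have mm (f : 'I_l -> \bar R) : - (\big[Order.min/+oo]_(k < l) f k) = \big[Order.max/-oo]_(k < l) - f k.
  by rewrite (big_morph _ oppe_min (erefl : - +oo = -oo)).
have MM (f : 'I_l -> \bar R) : - (\big[Order.max/-oo]_(k < l) f k) = \big[Order.min/+oo]_(k < l) - f k.
  by rewrite (big_morph _ oppe_max (erefl : - -oo = +oo)).
apply/seteqP; split => p /=.
  move=> [t [tfin [tmin ->]]]; exists (fun k => - t k); split.
    by move=> k; have := tfin k; case: (t k).
  split; first by rewrite -mm tmin oppe0.
  apply/funext => i /=; rewrite mm; apply: eq_bigr => k _.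
  by rewrite oppeD //; apply: defNy => //; apply/eqP.
move=> [t' [tfin [tmax Hp]]]; exists (fun k => - t' k); split.
  by move=> k; have := tfin k; case: (t' k).
split; first by rewrite -MM tmax oppe0.
apply/funext => i /=.
have /= Hpi := congr1 (fun f => f i) Hp.
rewrite -[p i]oppeK Hpi MM; apply: eq_bigr => k _.
rewrite oppeD ?oppeK //; apply: defy; [apply/eqP; exact: tfin | by case: (x k i) (xfin' k i)].
Qed.

End Neg.

End Helpers.
Import Helpers.

Theorem mainTheorem1 (R : realType) (d l : nat) :
  (forall (x : 'I_l -> 'I_d -> \bar R) (alpha : nat -> R),
     (forall k i, x k i <> +oo%E) ->
     (forall n, 0 < alpha n) ->
     alpha @ \oo --> +oo ->
     PK_lim (fun n => Co_sigma (alpha n) x) (Co_maxplus x))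
  /\
  (forall (x : 'I_l -> 'I_d -> \bar R) (alpha : nat -> R),
     (forall k i, x k i <> -oo%E) ->
     (forall n, alpha n < 0) ->
     alpha @ \oo --> -oo ->
     PK_lim (fun n => Co_sigma (alpha n) x) (Co_minplus x)).
Proof.
split.
  by move=> x alpha xfin a0 ainf; exact: (@pos_case R d l x alpha).
move=> x alpha xfin a0 ainf.
have H := @pos_case R d l (fun k i => - x k i)%E (fun n => - alpha n).
have /H {}H : forall k i, (- x k i)%E <> +oo%E.
  by move=> k i; have := xfin k i; case: (x k i).
have /H {}H : forall n, 0 < - alpha n by move=> n; rewrite oppr_gt0.
have /H {}H : (fun n => - alpha n) @ \oo --> +oo by apply/cvgNry.
have E1 : (fun n => Co_sigma (alpha n) x) =
  (fun n => [set p | Co_sigma (- alpha n) (fun k i => - x k i)%E (fun i => - p i)%E]).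
  by apply/funext => n; exact: negsig.
rewrite E1 (@negmin R d l x xfin); exact: PKneg H.
Qed.
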